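(* Let $G=(V,E,w)$, the partition $SG_1,\dots,SG_m$, the object set $O$ with $|O|>k$, the query $q=(v_q,k)$, and the D$k$NN protocol be as described in the context, and assume $G$ is connected and every edge weight satisfies $w(u,v)\ge \|\mathrm{pos}(u)-\mathrm{pos}(v)\|_2$. Consider any execution of the protocol (with arbitrary interleaving and delays of message processing, and with arbitrarily stale local bounds subject to the constraint in the context). If at some time the acknowledgment buffer $\mathcal{B}_q$ is empty, then the returned set $R(q)$ (the $k$ reported objects with smallest reported distances, ties broken arbitrarily) satisfies: $|R(q)|=k$, $R(q)\subseteq O$, and for all $o\in R(q)$ and all $o'\in O\setminus R(q)$, $SD(v_q,o)\le SD(v_q,o')$.
   Context: Road network: $G=(V,E,w)$ is a finite undirected graph with non-negative edge weights $w$; each vertex $v$ has a planar position $\mathrm{pos}(v)\in\mathbb{R}^2$. $SD(u,v)$ denotes the shortest-path distance in $G$. The vertex set is partitioned into subgraphs $SG_1,\dots,SG_m$; each $SG_p$ is the induced subgraph on its vertex set, and $d_p(a,b)$ is the shortest-path distance between $a,b$ inside $SG_p$ (using only edges with both endpoints in $SG_p$). A vertex of $SG_p$ is a border vertex if it has a neighbor in some $SG_{p'}$, $p'\ne p$; such edges are external edges. Each moving object $o\in O$ has a live vertex $v(o)\in V$ (the next vertex it travels toward) and a remaining cost $\delta(o)\ge 0$; define $SD(v_q,o)=SD(v_q,v(o))+\delta(o)$. For the query $q=(v_q,k)$, let $E(v_q,SG_p)$ be the minimum Euclidean distance from $\mathrm{pos}(v_q)$ to the positions of the border vertices of $SG_p$.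 D$k$NN protocol. Each subgraph $SG_p$ keeps a table $D_p(\cdot)$ (initially $+\infty$) over its own vertices and the outside neighbors of its border vertices, and a local bound $\varepsilon_p$. A query unit collects reported pairs $(o,\text{dist})$, keeping for each object its minimum reported distance $\mathrm{rep}(o)$; the global bound $\varepsilon(t)$ at time $t$ is the $k$-th smallest value of $\mathrm{rep}$ over distinct objects reported so far ($+\infty$ if fewer than $k$). The query starts by sending the message $(v_q,0)$ to the subgraph containing $v_q$. When $SG_p$ processes a message $(v_b,\text{dist})$ with $v_b\in SG_p$: if $\text{dist}>\varepsilon_p$ or $\text{dist}>D_p(v_b)$, it does nothing further; otherwise it sets $D_p(v_b)=\text{dist}$; for each live vertex $v_i\in SG_p$ with $\text{dist}+d_p(v_b,v_i)\le D_p(v_i)$ it sets $D_p(v_i)=\text{dist}+d_p(v_b,v_i)$ and reports to the query unit every object $o$ with $v(o)=v_i$ and $D_p(v_i)+\delta(o)<\varepsilon_p$, with distance $D_p(v_i)+\delta(o)$; for each border vertex $v_j\in SG_p$ and each neighbor $v'\notin SG_p$ of $v_j$ with $\text{dist}+d_p(v_b,v_j)+w(v_j,v')\le D_p(v')$, it sets $D_p(v')$ to that value and sends the message $(v',D_p(v'))$ to the subgraph containing $v'$. Bounds: at every time $t$, each non-pruned subgraph uses a local bound $\varepsilon_p(t)\ge\varepsilon(t)$ (staleness allowed). Pruning: if at some time $t$ a subgraph $SG_p$ not containing $v_q$ satisfies $E(v_q,SG_p)>\varepsilon(t)$, it may be pruned, after which $\varepsilon_p=0$ (it discards all further messages). Acknowledgments: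 whenever a message is sent from $SG_p$ to $SG_{p'}$, a token is inserted into the buffer $\mathcal{B}_q$; the token is removed when $SG_{p'}$ has finished processing that message (including dispatching all messages it generates, whose tokens are inserted before removal). The initial message also carries a token. *)

(* Defs.v *)
From HB Require Import structures.
From mathcomp Require Import all_boot all_order all_algebra.
From mathcomp Require Import boolp classical_sets reals constructive_ereal ereal.
Set Implicit Arguments. Unset Strict Implicit. Unset Printing Implicit Defensive.
Import Order.TTheory GRing.Theory Num.Theory.
Local Open Scope ring_scope.
Local Open Scope classical_set_scope.

Record net (R : realType) := Net {
  V : finType;
  O : finType;
  adj : rel V;
  w : V -> V -> R;                (* edge weights (relevant on edges) *)
  pos : V -> R * R;
  m : nat;
  part : V -> 'I_m;
  vo : O -> V;
  delta : O -> R
}.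
Arguments V {R} n.
Arguments O {R} n.
Arguments adj {R} n.
Arguments w {R} n.
Arguments pos {R} n.
Arguments m {R} n.
Arguments part {R} n.
Arguments vo {R} n.
Arguments delta {R} n.

Section Defs.
Context {R : realType} (N : net R).
Local Notation V := (V N).
Local Notation O := (O N).
Local Notation adj := (adj N).
Local Notation w := (w N).
Local Notation part := (part N).

Definition euclid (a b : R * R) : R :=
  Num.sqrt ((a.1 - b.1) ^+ 2 + (a.2 - b.2) ^+ 2).

Definition wlen (u : V) (s : seq V) : R :=
  \sum_(e <- zip (u :: s) s) w e.1 e.2.

Definition SD (u v : V) : \bar R :=
  ereal_inf [set (wlen u s)%:E | s in [set s | path adj u s && (last u s == v)]].

Definition dp (p : 'I_(m N)) (a b : V) : \bar R :=
  ereal_inf [set (wlen a s)%:E | s in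
    [set s | [&& path adj a s, last a s == b & all (fun x => part x == p) (a :: s)]]].

Definition SDo (vq : V) (o : O) : \bar R := (SD vq (vo N o) + (delta N o)%:E)%E.

Definition border (p : 'I_(m N)) (v : V) : bool :=
  (part v == p) && [exists u, adj v u && (part u != p)].

Definition Edist (vq : V) (p : 'I_(m N)) : \bar R :=
  ereal_inf [set (euclid (pos N vq) (pos N b))%:E | b in [set b | border p b]].

Definition live (v : V) : bool := [exists o, vo N o == v].

Record state := State {
  Dtab : 'I_(m N) -> V -> \bar R;
  pending : seq (V * R);          (* messages (v_b, dist) sent but not yet fully
                                     processed = tokens in the buffer B_q;
                                     the target subgraph is part v_b *)
  reports : seq (O * R);
  pruned : 'I_(m N) -> bool
}.

Definition init_state (vq : V) : state :=
  State (fun _ _ => +oo%E) [:: (vq, 0)] [::] (fun _ => false).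

Definition reported (s : state) : {set O} :=
  [set o | has (fun r => r.1 == o) (reports s)].

Definition rep (s : state) (o : O) : \bar R :=
  \big[Order.min/+oo%E]_(r <- reports s | r.1 == o) (r.2)%:E.

(* k-th smallest value of rep over distinct reported objects, +oo if fewer than k
   (for k >= 1) *)
Definition eps (k : nat) (s : state) : \bar R :=
  nth +oo%E (sort (fun x y : \bar R => (x <= y)%E)
                  [seq rep s o | o <- enum (reported s)]) k.-1.

Definition out_pairs (p : 'I_(m N)) : seq (V * V) :=
  [seq vv <- [seq (a, b) | a <- enum V, b <- enum V]
     | [&& part vv.1 == p, adj vv.1 vv.2 & part vv.2 != p]].

Definition upd_fun (f : V -> \bar R) (x : V) (y : \bar R) : V -> \bar R :=
  fun v => if v == x then y else f v.

Definition process (s : state) (pre post : seq (V * R)) (vb : V) (dist : R)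
    (ep : \bar R) (ord : seq (V * V)) : state :=
  let p := part vb in
  if (ep < dist%:E)%E || (Dtab s p vb < dist%:E)%E then
    State (Dtab s) (pre ++ post) (reports s) (pruned s)
  else
    let D1 := upd_fun (Dtab s p) vb dist%:E in
    let relax (vi : V) :=
      [&& part vi == p, live vi, dp p vb vi \is a fin_num
        & ((dist + fine (dp p vb vi))%:E <= D1 vi)%E] in
    let D2 := fun v => if relax v then (dist + fine (dp p vb v))%:E else D1 v in
    let newrep :=
      [seq (o, (dist + fine (dp p vb (vo N o))) + delta N o)
         | o <- enum O & relax (vo N o) &&
             (((dist + fine (dp p vb (vo N o))) + delta N o)%:E < ep)%E] in
    let bstep (acc : (V -> \bar R) * seq (V * R)) (vv : V * V) :=
      let c := dp p vb vv.1 in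
      let val := dist + fine c + w vv.1 vv.2 in
      if (c \is a fin_num) && (val%:E <= acc.1 vv.2)%E
      then (upd_fun acc.1 vv.2 val%:E, rcons acc.2 (vv.2, val))
      else acc in
    let res := foldl bstep (D2, [::]) ord in
    State (fun p' => if p' == p then res.1 else Dtab s p')
          (pre ++ post ++ res.2)
          (reports s ++ newrep)
          (pruned s).

Inductive step (vq : V) (k : nat) : state -> state -> Prop :=
| StepProcess (s : state) pre post vb dist ep ord :
    pending s = pre ++ (vb, dist) :: post ->
    (* local bound: 0 once pruned, otherwise any (possibly stale) ep >= eps(t) *)
    (if pruned s (part vb) then ep = 0%:E else (eps k s <= ep)%E) ->
    perm_eq ord (out_pairs (part vb)) ->
    step vq k s (process s pre post vb dist ep ord)
| StepPrune (s : state) (p : 'I_(m N)) :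
    ~~ pruned s p -> part vq != p -> (eps k s < Edist vq p)%E ->
    step vq k s (State (Dtab s) (pending s) (reports s)
                   (fun p' => if p' == p then true else pruned s p')).

Definition execution (vq : V) (k : nat) (ex : nat -> state) (n : nat) : Prop :=
  ex 0 = init_state vq /\ forall i, (i < n)%N -> step vq k (ex i) (ex i.+1).

Definition returned (k : nat) (s : state) (Rq : {set O}) : Prop :=
  [/\ Rq \subset reported s, #|Rq| = minn k #|reported s|
    & forall o o', o \in Rq -> o' \in reported s :\: Rq -> (rep s o <= rep s o')%E].

End Defs.

(* Main.v *)
Require Import Defs.
From HB Require Import structures.
From mathcomp Require Import all_boot all_order all_algebra.
From mathcomp Require Import boolp classical_sets reals constructive_ereal ereal.
From mathcomp Require Import ring lra.
Import Order.TTheory GRing.Theory Num.Theory.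
Local Open Scope ring_scope.

Section Helpers.
Context {R : realType}.
Local Open Scope ereal_scope.

Lemma le_add_inf (a b : \bar R) (C : set (\bar R)) :
  b != -oo -> (forall y, C y -> 0 <= y) ->
  (forall y, C y -> a <= b + y) -> a <= b + ereal_inf C.
Proof.
move=> bN C0 H.
have iC : ereal_inf C != -oo.
  apply/negP=> /eqP E; have : 0 <= ereal_inf C by apply: le_ereal_inf_tmp.
  by rewrite E.
case: b bN H => [b| |] bN H; last by rewrite eqxx in bN.
- rewrite -leeBlDl //; apply: le_ereal_inf_tmp => y Cy.
  by rewrite leeBlDl //; exact: H.
- by rewrite addye // leey.
Qed.

Lemma euclid_tri (a b c : R * R) :
  (euclid a c <= euclid a b + euclid b c)%R.
Proof.
rewrite /euclid.
set x1 := (a.1 - b.1)%R; set x2 := (a.2 - b.2)%R.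
set y1 := (b.1 - c.1)%R; set y2 := (b.2 - c.2)%R.
have -> : (a.1 - c.1 = x1 + y1)%R by rewrite /x1 /y1; ring.
have -> : (a.2 - c.2 = x2 + y2)%R by rewrite /x2 /y2; ring.
set X := (x1 ^+ 2 + x2 ^+ 2)%R; set Y := (y1 ^+ 2 + y2 ^+ 2)%R.
have X0 : (0 <= X)%R by rewrite /X; apply: addr_ge0; apply: sqr_ge0.
have Y0 : (0 <= Y)%R by rewrite /Y; apply: addr_ge0; apply: sqr_ge0.
have S0 : (0 <= Num.sqrt X + Num.sqrt Y)%R by apply: addr_ge0; apply: sqrtr_ge0.
have CS : (x1 * y1 + x2 * y2 <= Num.sqrt X * Num.sqrt Y)%R.
  rewrite -sqrtrM //.
  apply: (le_trans (ler_norm _)).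
  rewrite -sqrtr_sqr.
  rewrite ler_sqrt; last by apply: mulr_ge0.
  rewrite /X /Y -subr_ge0. have -> : ((x1 ^+ 2 + x2 ^+ 2) * (y1 ^+ 2 + y2 ^+ 2) - (x1 * y1 + x2 * y2) ^+ 2 = (x1*y2 - x2*y1)^+2)%R by ring. by apply: sqr_ge0.
have sX := sqr_sqrtr X0; have sY := sqr_sqrtr Y0.
apply: (le_trans (y := Num.sqrt ((Num.sqrt X + Num.sqrt Y) ^+ 2))); last first.
  by rewrite sqrtr_sqr ger0_norm.
rewrite ler_sqrt; last by apply: sqr_ge0.
rewrite /X /Y in CS sX sY *.
nra.
Qed.


End Helpers.

Section Graph.
Context {R : realType} (N : net R).
Hypothesis adj_sym : forall u v, adj N u v = adj N v u.
Hypothesis w_ge0 : forall u v, adj N u v -> (0 <= w N u v)%R.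
Hypothesis w_euclid : forall u v, adj N u v -> (euclid (pos N u) (pos N v) <= w N u v)%R.
Implicit Types (u v x y a b c vq : V N) (s t : seq (V N)) (p : 'I_(m N)).
Local Open Scope ereal_scope.

Lemma wlen_nil u : wlen u [::] = 0%R.
Proof. by rewrite /wlen big_nil. Qed.

Lemma wlen_cons u x s : wlen u (x :: s) = (w N u x + wlen x s)%R.
Proof. by rewrite /wlen /= big_cons. Qed.

Lemma wlen_cat u s t : wlen u (s ++ t) = (wlen u s + wlen (last u s) t)%R.
Proof.
elim: s u => [|x s IH] u /=; first by rewrite wlen_nil add0r.
by rewrite !wlen_cons IH addrA.
Qed.

Lemma wlen_ge0 u s : path (adj N) u s -> (0 <= wlen u s)%R.
Proof.
elim: s u => [|x s IH] u /=; first by rewrite wlen_nil.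
case/andP=> a p; rewrite wlen_cons; apply: addr_ge0; [exact: w_ge0|exact: IH].
Qed.

Lemma SD_le u v s : path (adj N) u s -> last u s = v -> SD u v <= (wlen u s)%:E.
Proof.
move=> ps ls; apply: ereal_inf_lbound; exists s => //=.
by rewrite ps ls eqxx.
Qed.

Lemma SD_ge0 u v : 0 <= SD u v.
Proof.
apply: le_ereal_inf_tmp => _ [s /= /andP[ps _] <-].
by rewrite lee_fin; exact: wlen_ge0.
Qed.

Lemma dp_le p a b s : path (adj N) a s -> last a s = b ->
  all (fun x => part N x == p) (a :: s) -> dp p a b <= (wlen a s)%:E.
Proof.
move=> ps ls al; apply: ereal_inf_lbound; exists s => //=.
by rewrite ps ls eqxx.
Qed.

Lemma dp_ge0 p a b : 0 <= dp p a b.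
Proof.
apply: le_ereal_inf_tmp => _ [s /= /and3P[ps _ _] <-].
by rewrite lee_fin; exact: wlen_ge0.
Qed.

Lemma dp_refl p a : part N a = p -> dp p a a = 0.
Proof.
move=> pa; apply/eqP; rewrite eq_le dp_ge0 andbT.
have := @dp_le p a a [::] erefl erefl; rewrite /= pa eqxx wlen_nil; exact.
Qed.

Lemma ge0_neqNy (x : \bar R) : 0 <= x -> x != -oo.
Proof. by case: x. Qed.

Lemma SD_walk u v vq s : path (adj N) u s -> last u s = v ->
  SD vq v <= SD vq u + (wlen u s)%:E.
Proof.
move=> ps ls; rewrite addeC; apply: le_add_inf => //.
  by move=> y [t /= /andP[pt _] <-]; rewrite lee_fin; exact: wlen_ge0.
move=> _ [t /= /andP[pt /eqP lt] <-].
rewrite -EFinD addrC -lt -(wlen_cat vq t s).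
apply: SD_le; first by rewrite cat_path pt lt ps.
by rewrite last_cat lt.
Qed.

Lemma SD_dp vq p u v : SD vq v <= SD vq u + dp p u v.
Proof.
apply: le_add_inf; first exact/ge0_neqNy/SD_ge0.
  by move=> y [t /= /and3P[pt _ _] <-]; rewrite lee_fin; exact: wlen_ge0.
move=> _ [s /= /and3P[ps /eqP ls _] <-]; exact: SD_walk.
Qed.

Lemma SD_edge vq u v : adj N u v -> SD vq v <= SD vq u + (w N u v)%:E.
Proof.
move=> a; have := @SD_walk u v vq [:: v]; rewrite wlen_cons wlen_nil addr0.
by apply => //=; rewrite a.
Qed.

Lemma dp_walk p a b c s : path (adj N) b s -> last b s = c ->
  all (fun x => part N x == p) (b :: s) -> dp p a c <= dp p a b + (wlen b s)%:E.
Proof.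
move=> ps ls als; rewrite addeC; apply: le_add_inf => //.
  by move=> y [t /= /and3P[pt _ _] <-]; rewrite lee_fin; exact: wlen_ge0.
move=> _ [t /= /and3P[pt /eqP lt alt] <-].
rewrite -EFinD addrC -lt -(wlen_cat a t s).
apply: dp_le; first by rewrite cat_path pt lt ps.
  by rewrite last_cat lt.
rewrite -cat_cons all_cat; move: alt => /= -> /=; by case/andP: als.
Qed.

Lemma dp_tri p a b c : dp p a c <= dp p a b + dp p b c.
Proof.
apply: le_add_inf; first exact/ge0_neqNy/dp_ge0.
  by move=> y [t /= /and3P[pt _ _] <-]; rewrite lee_fin; exact: wlen_ge0.
move=> _ [s /= /and3P[ps /eqP ls als] <-]; exact: dp_walk.
Qed.

Lemma dp_edge p a u v : adj N u v -> part N u = p -> part N v = p ->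
  dp p a v <= dp p a u + (w N u v)%:E.
Proof.
move=> a' pu pv; have := @dp_walk p a u v [:: v]; rewrite wlen_cons wlen_nil addr0.
by apply => //=; rewrite ?a' ?pu ?pv ?eqxx.
Qed.

Lemma walk_border p u s : path (adj N) u s -> part N u != p -> part N (last u s) == p ->
  exists2 b, border p b & (euclid (pos N u) (pos N b) <= wlen u s)%R.
Proof.
elim: s u => [|x s IH] u /=; first by move=> _ /negbTE ->.
case/andP=> aux ps pu pl; rewrite wlen_cons.
have [px|npx] := eqVneq (part N x) p.
  exists x.
    rewrite /border px eqxx /=; apply/existsP; exists u.
    by rewrite adj_sym aux pu.
  apply: (le_trans (w_euclid _ _ aux)); rewrite lerDl; exact: wlen_ge0.
have [b bb eb] := IH x ps npx pl.
exists b => //; apply: (le_trans (euclid_tri _ (pos N x) _)).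
by apply: lerD => //; exact: w_euclid.
Qed.

Lemma SD_Edist vq v : part N v != part N vq -> Edist vq (part N v) <= SD vq v.
Proof.
move=> pv; apply: le_ereal_inf_tmp => _ [s /= /andP[ps /eqP ls] <-].
have h1 : part N vq != part N v by rewrite eq_sym.
have h2 : part N (last vq s) == part N v by rewrite ls.
have [b bb eb] := @walk_border (part N v) vq s ps h1 h2.
apply: (@le_trans _ _ (euclid (pos N vq) (pos N b))%:E); last by rewrite lee_fin.
by apply: ereal_inf_lbound; exists b.
Qed.

End Graph.

Section EpsLemmas.
Context {R : realType}.
Local Open Scope ereal_scope.
Implicit Types (l s : seq (\bar R)) (e : \bar R).

Definition lee_rel : rel (\bar R) := fun x y => x <= y.

Lemma sorted_nth_le s e j : sorted lee_rel s ->
  (j < count (fun x => (x <= e)%E) s)%N -> nth +oo s j <= e.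
Proof.
elim: s j => [|x s IH] j //= srt.
have xs : all (lee_rel x) s by apply: order_path_min => //; exact: le_trans.
case: j => [|j] /=.
  move=> h; have : has (fun y => (y <= e)%E) (x :: s) by rewrite has_count.
  case/hasP=> y; rewrite inE => /orP[/eqP->//|ys ye].
  exact: le_trans (allP xs y ys) ye.
move=> h; apply: IH; first exact: path_sorted srt.
by move: h; case: (x <= e); rewrite /= ?add1n ?add0n // => /ltnW.
Qed.

Lemma sorted_count_nth s j : sorted lee_rel s -> (j < size s)%N ->
  (j < count (fun x => (x <= nth +oo s j)%E) s)%N.
Proof.
elim: s j => [|x s IH] j //= srt.
have xs : all (lee_rel x) s by apply: order_path_min => //; exact: le_trans.
case: j => [|j] /=; first by rewrite lexx.
move=> js; have := IH j (path_sorted srt) js.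
have -> : x <= nth +oo s j by apply: (allP xs); exact: mem_nth.
by rewrite add1n.
Qed.

Lemma nth_sort_le l e j : (j < count (fun x => (x <= e)%E) l)%N ->
  nth +oo (sort lee_rel l) j <= e.
Proof.
move=> h; apply: sorted_nth_le; first by apply: sort_sorted => x y; exact: le_total.
by rewrite ((permP (permEl (perm_sort _ _))) ).
Qed.

Lemma count_nth_sort l j : (j < size l)%N ->
  (j < count (fun x => (x <= nth +oo (sort lee_rel l) j)%E) l)%N.
Proof.
move=> h.
rewrite -((permP (permEl (perm_sort lee_rel l)))).
apply: sorted_count_nth; first by apply: sort_sorted => x y; exact: le_total.
by rewrite size_sort.
Qed.

End EpsLemmas.

Lemma count_enum_card (T : finType) (A : {set T}) (Q : pred T) :
  count Q (enum A) = #|[set x in A | Q x]|.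
Proof.
rewrite -size_filter -(card_uniqP _); last by rewrite filter_uniq ?enum_uniq.
by apply: eq_card => x; rewrite mem_filter mem_enum !inE andbC.
Qed.

Section Rep.
Context {R : realType} (T : eqType).
Local Open Scope ereal_scope.
Definition bmin (l : seq (T * R)) (o : T) : \bar R :=
  \big[Order.min/+oo]_(r <- l | r.1 == o) (r.2)%:E.

Lemma bmin_le l o x : (o, x) \in l -> bmin l o <= x%:E.
Proof.
rewrite /bmin; elim: l => [|r l IH] //=; rewrite inE big_cons.
case/orP=> [/eqP <-|h] /=; first by rewrite eqxx ge_min lexx.
case: ifP => _; last exact: IH h.
by rewrite ge_min IH ?orbT.
Qed.

Lemma bmin_ge c l o : (forall r, r \in l -> r.1 == o -> c <= r.2%:E) -> c <= bmin l o.
Proof.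
rewrite /bmin; elim: l => [|r l IH] H /=; first by rewrite big_nil leey.
rewrite big_cons.
have IH' : c <= \big[Order.min/+oo]_(r <- l | r.1 == o) (r.2)%:E.
  by apply: IH => r' r'l; apply: H; rewrite inE r'l orbT.
case: ifP => ro //; rewrite le_min IH' andbT; apply: H => //; exact: mem_head.
Qed.

Lemma bmin_has l o : bmin l o < +oo -> has (fun r => r.1 == o) l.
Proof.
apply: contraTT => /hasPn h; rewrite -leNgt; apply: bmin_ge => r rl ro.
by move: (h r rl); rewrite ro.
Qed.

Lemma bmin_cat l1 l2 o : bmin (l1 ++ l2) o <= bmin l1 o.
Proof. by rewrite /bmin big_cat /= ge_min lexx. Qed.

End Rep.

Section Protocol.
Context {R : realType} (N : net R) (vq : V N) (k : nat).
Hypothesis adj_sym : forall u v, adj N u v = adj N v u.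
Hypothesis w_ge0 : forall u v, adj N u v -> (0 <= w N u v)%R.
Hypothesis w_euclid : forall u v, adj N u v -> (euclid (pos N u) (pos N v) <= w N u v)%R.
Hypothesis delta_ge0 : forall o, (0 <= delta N o)%R.
Hypothesis k_gt0 : (0 < k)%N.
Implicit Types (u v x y a b c : V N) (s : state N) (p : 'I_(m N)) (o : O N).
Local Open Scope ereal_scope.

Let dpge0 p a b : 0 <= dp p a b := @dp_ge0 R N w_ge0 p a b.
Let SDge0 u v : 0 <= SD u v := @SD_ge0 R N w_ge0 u v.
Let dprefl p a : part N a = p -> dp p a a = 0 := @dp_refl R N w_ge0 p a.
Let SDdp p u v : SD vq v <= SD vq u + dp p u v := @SD_dp R N w_ge0 vq p u v.
Let SDedge u v : adj N u v -> SD vq v <= SD vq u + (w N u v)%:E := @SD_edge R N w_ge0 vq u v.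
Let dptri p a b c : dp p a c <= dp p a b + dp p b c := @dp_tri R N w_ge0 p a b c.
Let dpedge p a u v : adj N u v -> part N u = p -> part N v = p ->
  dp p a v <= dp p a u + (w N u v)%:E := @dp_edge R N w_ge0 p a u v.
Let SDEdist v : part N v != part N vq -> Edist vq (part N v) <= SD vq v :=
  @SD_Edist R N adj_sym w_ge0 w_euclid vq v.

Definition D1 s vb (dist : R) := upd_fun (Dtab s (part N vb)) vb dist%:E.
Definition relax s vb (dist : R) (vi : V N) :=
  [&& part N vi == part N vb, live vi, dp (part N vb) vb vi \is a fin_num
    & ((dist + fine (dp (part N vb) vb vi))%:E <= D1 s vb dist vi)].
Definition D2 s vb (dist : R) : V N -> \bar R := fun v =>
  if relax s vb dist v then (dist + fine (dp (part N vb) vb v))%:E else D1 s vb dist v.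
Definition newrep s vb (dist : R) (ep : \bar R) :=
  [seq (o, (dist + fine (dp (part N vb) vb (vo N o))) + delta N o)%R
         | o <- enum (O N) & relax s vb dist (vo N o) &&
             (((dist + fine (dp (part N vb) vb (vo N o))) + delta N o)%:E < ep)].
Definition valv vb (dist : R) (vv : V N * V N) : R :=
  (dist + fine (dp (part N vb) vb vv.1) + w N vv.1 vv.2)%R.
Definition bstep vb (dist : R) (acc : (V N -> \bar R) * seq (V N * R)) (vv : V N * V N) :=
  if (dp (part N vb) vb vv.1 \is a fin_num) && ((valv vb dist vv)%:E <= acc.1 vv.2)
  then (upd_fun acc.1 vv.2 (valv vb dist vv)%:E, rcons acc.2 (vv.2, valv vb dist vv))
  else acc.
Definition res s vb dist ord := foldl (bstep vb dist) (D2 s vb dist, [::]) ord.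

Definition dropc s vb (dist : R) (ep : \bar R) :=
  (ep < dist%:E) || (Dtab s (part N vb) vb < dist%:E).

Lemma process_drop s pre post vb dist ep ord : dropc s vb dist ep ->
  process s pre post vb dist ep ord = State (Dtab s) (pre ++ post) (reports s) (pruned s).
Proof. by rewrite /process /dropc => ->. Qed.

Lemma process_acc s pre post vb dist ep ord : ~~ dropc s vb dist ep ->
  process s pre post vb dist ep ord =
  State (fun p' => if p' == part N vb then (res s vb dist ord).1 else Dtab s p')
        (pre ++ post ++ (res s vb dist ord).2)
        (reports s ++ newrep s vb dist ep) (pruned s).
Proof. by rewrite /process /dropc => /negbTE ->. Qed.


Lemma foldl_le vb dist l acc v : (foldl (bstep vb dist) acc l).1 v <= acc.1 v.
Proof.
elim: l acc => [|vv l IH] acc //=; apply: le_trans (IH _) _.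
rewrite /bstep; case: ifP => //= /andP[_ h]; rewrite /upd_fun.
by case: eqP => [->|].
Qed.

Lemma foldl_val vb dist l acc vv : vv \in l -> dp (part N vb) vb vv.1 \is a fin_num ->
  (foldl (bstep vb dist) acc l).1 vv.2 <= (valv vb dist vv)%:E.
Proof.
elim: l acc => [|vv' l IH] acc //=; rewrite inE => /orP[/eqP <-|h] f; last exact: IH.
apply: le_trans (foldl_le _ _ _ _ _) _.
rewrite /bstep f /=; case: ifP => [_|/negbT]; first by rewrite /upd_fun /= eqxx.
by rewrite -ltNge => /ltW.
Qed.

Lemma foldl_src vb dist (D0 : V N -> \bar R) l acc :
  (forall v, acc.1 v = D0 v \/ exists2 y, (v, y) \in acc.2 & acc.1 v = y%:E) ->
  forall v, (foldl (bstep vb dist) acc l).1 v = D0 v \/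
    exists2 y, (v, y) \in (foldl (bstep vb dist) acc l).2 &
                (foldl (bstep vb dist) acc l).1 v = y%:E.
Proof.
elim: l acc => [|vv l IH] acc H //=; apply: IH => v.
rewrite /bstep; case: ifP => _ //=; rewrite /upd_fun.
case: eqP => [->|nv].
  by right; exists (valv vb dist vv); rewrite // mem_rcons mem_head.
case: (H v) => [->|[y yi ye]]; first by left.
by right; exists y => //; rewrite mem_rcons inE yi orbT.
Qed.

Lemma foldl_shape vb dist (P : V N * R -> Prop) l acc :
  (forall z, z \in acc.2 -> P z) ->
  (forall vv, vv \in l -> dp (part N vb) vb vv.1 \is a fin_num -> P (vv.2, valv vb dist vv)) ->
  forall z, z \in (foldl (bstep vb dist) acc l).2 -> P z.
Proof.
elim: l acc => [|vv l IH] acc H1 H2 //=; apply: IH; last first.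
  by move=> vv' vi f; apply: H2 => //; rewrite inE vi orbT.
rewrite /bstep; case: ifP => [/andP[f _]|_] //= z.
rewrite mem_rcons inE => /orP[/eqP ->|]; last exact: H1.
by apply: H2 => //; rewrite mem_head.
Qed.


Definition cnt s e := #|[set o in reported s | rep s o <= e]|.

Lemma eps_le s e : (k <= cnt s e)%N -> eps k s <= e.
Proof.
move=> h; rewrite /eps; apply: nth_sort_le.
rewrite count_map count_enum_card prednK //.
Qed.

Lemma cnt_eps s : (k <= #|reported s|)%N -> (k <= cnt s (eps k s))%N.
Proof.
move=> h; rewrite /cnt /eps.
have := @count_nth_sort R [seq rep s o | o <- enum (reported s)] k.-1.
rewrite size_map -cardE prednK // => /(_ h).
by rewrite count_map count_enum_card.
Qed.

Lemma eps_big s : (#|reported s| < k)%N -> eps k s = +oo.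
Proof.
move=> h; rewrite /eps nth_default // size_sort size_map -cardE.
by rewrite -ltnS prednK.
Qed.

Lemma eps_mono s s' : reported s \subset reported s' ->
  (forall o, rep s' o <= rep s o) -> eps k s' <= eps k s.
Proof.
move=> sub le; case: (ltnP #|reported s| k) => h; first by rewrite (@eps_big s h) leey.
apply: eps_le; apply: leq_trans (@cnt_eps s h) _; rewrite /cnt; apply: subset_leq_card.
apply/fintype.subsetP => o.
have sub2 := fintype.subsetP sub o; rewrite !inE in sub2 *; case/andP=> oi oe.
by rewrite (sub2 oi) (le_trans (le _) oe).
Qed.


Definition cov s v (x : \bar R) :=
  (exists2 y, (v, y) \in pending s & y%:E <= x) \/
  (exists2 b, part N b = part N v & Dtab s (part N v) b + dp (part N v) b v <= x) \/
  eps k s <= x.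

Record Inv s : Prop := {
  i_lbD : forall p v, SD vq v <= Dtab s p v;
  i_lbP : forall z, z \in pending s -> SD vq z.1 <= z.2%:E;
  i_lbR : forall r, r \in reports s -> SDo vq r.1 <= r.2%:E;
  i_pr : forall p, pruned s p -> part N vq != p /\ eps k s < Edist vq p;
  i_C1 : forall p b vi, part N b = p -> part N vi = p -> live vi ->
           Dtab s p vi <= Dtab s p b + dp p b vi;
  i_C2 : forall p b vj v', part N b = p -> part N vj = p -> adj N vj v' -> part N v' != p ->
           Dtab s p v' <= Dtab s p b + dp p b vj + (w N vj v')%:E;
  i_cov0 : cov s vq 0;
  i_cov : forall p v', part N v' != p -> cov s v' (Dtab s p v');
  i_R : forall o, Dtab s (part N (vo N o)) (vo N o) + (delta N o)%:E < eps k s ->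
           rep s o <= Dtab s (part N (vo N o)) (vo N o) + (delta N o)%:E
}.

Lemma Inv_init : Inv (init_state vq).
Proof.
split => //=.
- by move=> p v; rewrite leey.
- move=> z; rewrite inE => /eqP -> /=.
  by have := @SD_le _ N vq vq [::] erefl erefl; rewrite wlen_nil.
- by move=> p b vi _ _ _; rewrite addye ?ge0_neqNy ?dpge0.
- by move=> p b vj v' _ _ _ _; rewrite addye ?ge0_neqNy ?dpge0 // addye.
- by left; exists 0%R; rewrite ?mem_head.
- by move=> p v' _; right; right; rewrite leey.
- by move=> o; rewrite addye // ltNge leey.
Qed.

Lemma Inv_prune s p : Inv s -> part N vq != p -> eps k s < Edist vq p ->
  Inv (State (Dtab s) (pending s) (reports s)
               (fun p' => if p' == p then true else pruned s p')).
Proof.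
case=> lbD lbP lbR pr C1 C2 cv0 cv RR qp ep; split => //=.
move=> p'; case: eqP => [-> _|_]; first by split.
exact: pr.
Qed.


Lemma cov_final s v (x : \bar R) : pending s = [::] -> cov s v x ->
  (exists2 b, part N b = part N v & Dtab s (part N v) b + dp (part N v) b v <= x) \/
  eps k s <= x.
Proof. by move=> pe [[y]|[]]; rewrite ?pe // => *; [left|right]. Qed.
Arguments cov_final {s v x}.

Definition Pw s u (L : R) :=
  (exists2 b, part N b = part N u & Dtab s (part N u) b + dp (part N u) b u <= L%:E) \/
  eps k s <= L%:E.

Lemma Pw_step s u x L : Inv s -> pending s = [::] -> adj N u x -> Pw s u L ->
  Pw s x (L + w N u x)%R.
Proof.
case=> lbD lbP lbR pr C1 C2 cv0 cv RR pe aux [[b pb hb]|he]; last first.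
  by right; apply: le_trans he _; rewrite lee_fin lerDl w_ge0.
have [pxu|pxu] := eqVneq (part N x) (part N u).
  left; exists b; rewrite pxu //.
  apply: le_trans (leeD2l _ (dpedge _ b _ _ aux erefl pxu)) _.
  by rewrite addeA EFinD; apply: leeD2r.
have h1 : Dtab s (part N u) x <= (L + w N u x)%:E.
  apply: le_trans (C2 _ b u x pb erefl aux pxu) _.
  by rewrite EFinD; apply: leeD2r.
case: (cov_final pe (cv _ _ pxu)) => [[b' pb' hb']|he].
  by left; exists b' => //; apply: le_trans hb' h1.
by right; apply: le_trans he h1.
Qed.
Arguments Pw_step {s u x L}.

Lemma Pw_walk s t u L : Inv s -> pending s = [::] -> path (adj N) u t -> Pw s u L ->
  Pw s (last u t) (L + wlen u t)%R.
Proof.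
move=> I pe; elim: t u L => [|x t IH] u L /=; first by rewrite wlen_nil addr0.
case/andP=> aux pt h; rewrite wlen_cons addrA; apply: IH => //.
exact: Pw_step aux h.
Qed.
Arguments Pw_walk {s t u L}.

Lemma Pw_vq s : Inv s -> pending s = [::] -> Pw s vq 0%R.
Proof. by case=> _ _ _ _ _ _ cv0 _ _ pe; exact: cov_final pe cv0. Qed.
Arguments Pw_vq {s}.

Lemma obj_bound s o t : Inv s -> pending s = [::] -> path (adj N) vq t ->
  last vq t = vo N o -> (wlen vq t + delta N o)%:E < eps k s ->
  rep s o <= (wlen vq t + delta N o)%:E.
Proof.
move=> I pe pt lt hl; have := Pw_walk I pe pt (Pw_vq I pe).
rewrite add0r lt => -[[b pb hb]|he]; last first.
  move: hl; rewrite ltNge; apply: contraNle => _.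
  by apply: le_trans he _; rewrite lee_fin lerDl.
case: I => lbD lbP lbR pr C1 C2 cv0 cv RR.
have lv : live (vo N o) by apply/existsP; exists o.
have hD := le_trans (C1 _ b _ pb erefl lv) hb.
have hD2 : Dtab s (part N (vo N o)) (vo N o) + (delta N o)%:E <= (wlen vq t + delta N o)%:E.
  by rewrite EFinD; apply: leeD2r.
apply: (le_trans _ hD2); apply: RR; exact: (le_lt_trans hD2 hl).
Qed.


Lemma Inv_drop s pre post vb dist ep :
  Inv s -> pending s = pre ++ (vb, dist) :: post ->
  (if pruned s (part N vb) then ep = 0 else eps k s <= ep) ->
  dropc s vb dist ep ->
  Inv (State (Dtab s) (pre ++ post) (reports s) (pruned s)).
Proof.
case=> lbD lbP lbR pr C1 C2 cv0 cv RR Hp Hep Hd.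
have inP z : z \in pre ++ post -> z \in pending s.
  by rewrite Hp !mem_cat inE => /orP[->|->]; rewrite ?orbT.
have lbvb : SD vq vb <= dist%:E by apply: (lbP (vb, dist)); rewrite Hp mem_cat mem_head orbT.
have settle : (exists2 b, part N b = part N vb &
                 Dtab s (part N vb) b + dp (part N vb) b vb <= dist%:E) \/
              eps k s <= dist%:E.
  case/orP: Hd => h.
    right; move: Hep; case: ifP => prd.
      move=> e0; have [pq lt] := pr _ prd.
      have := SDEdist vb; rewrite eq_sym => /(_ pq) hE.
      exact: ltW (lt_le_trans lt (le_trans hE lbvb)).
    by move=> he; apply: ltW (le_lt_trans he h).
  by left; exists vb => //; rewrite dprefl // adde0; exact: ltW.
have covP v (x : \bar R) : cov s v x ->
    cov (State (Dtab s) (pre ++ post) (reports s) (pruned s)) v x.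
  case=> [[y yi yx]|[h|h]]; [|by right; left|by right; right].
  move: yi; rewrite Hp mem_cat in_cons => /orP[h|/orP[/eqP[vE yE]|h]].
  - by left; exists y => //; rewrite mem_cat h.
  - subst v y; case: settle => [[b pb hb]|he]; last by right; right; apply: le_trans he yx.
    by right; left; exists b => //; apply: le_trans hb yx.
  - by left; exists y => //; rewrite mem_cat h orbT.
constructor => //=.
- by move=> z /inP; exact: lbP.
- exact: covP.
- by move=> p v' pv; apply: covP; exact: cv.
Qed.


Section Accept.
Variables (s : state N) (vb : V N) (dist : R) (ep : \bar R) (ord : seq (V N * V N)).
Hypothesis Hnd : ~~ (Dtab s (part N vb) vb < dist%:E).
Hypothesis Hord : perm_eq ord (out_pairs (part N vb)).
Local Notation p := (part N vb).

Lemma mem_out q vj v' :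
  ((vj, v') \in out_pairs q) = [&& part N vj == q, adj N vj v' & part N v' != q].
Proof.
rewrite /out_pairs mem_filter /=.
by rewrite (allpairs_f (fun a b => (a, b))) ?mem_enum ?andbT.
Qed.

Lemma mem_ord vj v' :
  ((vj, v') \in ord) = [&& part N vj == p, adj N vj v' & part N v' != p].
Proof. by rewrite (perm_mem Hord) mem_out. Qed.

Lemma D1_le v : D1 s vb dist v <= Dtab s p v.
Proof. by rewrite /D1 /upd_fun; case: eqP => [->|//]; rewrite leNgt. Qed.

Lemma D1_vb : D1 s vb dist vb = dist%:E.
Proof. by rewrite /D1 /upd_fun eqxx. Qed.

Lemma D1_ne v : v != vb -> D1 s vb dist v = Dtab s p v.
Proof. by rewrite /D1 /upd_fun => /negbTE ->. Qed.

Lemma D2_le v : D2 s vb dist v <= D1 s vb dist v.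
Proof. by rewrite /D2; case: ifP => // /and4P[]. Qed.

Lemma D2_relax v : relax s vb dist v -> D2 s vb dist v = dist%:E + dp p vb v.
Proof. by rewrite /D2 => h; rewrite h; case/and4P: h => _ _ f _; rewrite EFinD fineK. Qed.

Lemma D2_vb : D2 s vb dist vb = dist%:E.
Proof.
rewrite /D2; case: ifP => _; last exact: D1_vb.
by rewrite dprefl // /= addr0.
Qed.

Lemma dp_oo q a c : dp q a c \isn't a fin_num -> dp q a c = +oo.
Proof. by move: (dpge0 q a c); case: (dp q a c). Qed.
Arguments dp_oo {q a c}.

Lemma D2_bound v : part N v = p -> live v -> D2 s vb dist v <= dist%:E + dp p vb v.
Proof.
move=> pv lv; have [f|nf] := boolP (dp p vb v \is a fin_num); last first.
  by rewrite (dp_oo nf) addey // leey.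
case: (boolP (relax s vb dist v)) => [h|h]; first by rewrite D2_relax.
rewrite /D2 (negbTE h); move: h; rewrite /relax pv eqxx lv f /= -ltNge.
by rewrite EFinD fineK // => /ltW.
Qed.

Lemma D2_out v : part N v != p -> D2 s vb dist v = Dtab s p v.
Proof.
move=> pv; rewrite /D2 /relax (negbTE pv) /= D1_ne //.
by apply: contraNneq pv => ->.
Qed.

Lemma valvE vv : dp p vb vv.1 \is a fin_num ->
  (valv vb dist vv)%:E = dist%:E + dp p vb vv.1 + (w N vv.1 vv.2)%:E.
Proof. by move=> f; rewrite /valv !EFinD fineK. Qed.

Lemma res_le v : (res s vb dist ord).1 v <= D2 s vb dist v.
Proof. exact: foldl_le. Qed.

Lemma res_val vj v' : adj N vj v' -> part N vj = p -> part N v' != p ->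
  (res s vb dist ord).1 v' <= dist%:E + dp p vb vj + (w N vj v')%:E.
Proof.
move=> a pj pv.
have [f|nf] := boolP (dp p vb vj \is a fin_num); last first.
  by rewrite (dp_oo nf) addey // addye // leey.
have := @foldl_val vb dist ord (D2 s vb dist, [::]) (vj, v').
rewrite mem_ord pj eqxx a pv valvE //; exact.
Qed.

Definition res_shape (z : V N * R) :=
  exists2 vj, [/\ adj N vj z.1, part N vj = p, part N z.1 != p & dp p vb vj \is a fin_num]
        & z.2 = valv vb dist (vj, z.1).

Lemma res_out z : z \in (res s vb dist ord).2 -> res_shape z.
Proof.
apply: (@foldl_shape vb dist res_shape ord (D2 s vb dist, [::])) => // [[vj v']] /=.
rewrite mem_ord => /and3P[/eqP pj a pv] f; exists vj => //.
Qed.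

Lemma res_src v : (res s vb dist ord).1 v = D2 s vb dist v \/
  exists2 y, (v, y) \in (res s vb dist ord).2 & (res s vb dist ord).1 v = y%:E.
Proof. by apply: foldl_src => v'; left. Qed.

Lemma res_in v : part N v = p -> (res s vb dist ord).1 v = D2 s vb dist v.
Proof.
move=> pv; case: (res_src v) => // -[y yi _].
by have [vj [_ _ h _] _] := res_out _ yi; rewrite /= pv eqxx in h.
Qed.

End Accept.


Section AccInv.
Variables (s : state N) (pre post : seq (V N * R)) (vb : V N) (dist : R) (ep : \bar R)
  (ord : seq (V N * V N)).
Hypothesis I : Inv s.
Hypothesis Hp : pending s = pre ++ (vb, dist) :: post.
Hypothesis Hep : if pruned s (part N vb) then ep = 0 else eps k s <= ep.
Hypothesis Hord : perm_eq ord (out_pairs (part N vb)).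
Hypothesis Hnd : ~~ dropc s vb dist ep.
Local Notation p := (part N vb).
Local Notation r1 := (res s vb dist ord).1.
Local Notation r2 := (res s vb dist ord).2.

Definition s' := State (fun p' => if p' == p then r1 else Dtab s p')
  (pre ++ post ++ r2) (reports s ++ newrep s vb dist ep) (pruned s).

Let Hnd' : ~~ (Dtab s p vb < dist%:E).
Proof. by move: Hnd; rewrite /dropc negb_or => /andP[]. Qed.

Let lbvb : SD vq vb <= dist%:E.
Proof. by apply: (@i_lbP s I (vb, dist)); rewrite Hp mem_cat mem_head orbT. Qed.

Let Dt_le p' v : Dtab s' p' v <= Dtab s p' v.
Proof.
rewrite /=; case: eqP => [->|_] //.
apply: le_trans (res_le _ _ _ _ _) _; apply: le_trans (D2_le _ _ _ _) _; exact: D1_le.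
Qed.

Let rep_le o : rep s' o <= rep s o.
Proof. exact: bmin_cat. Qed.

Let rep_sub : reported s \subset reported s'.
Proof.
apply/fintype.subsetP => o; rewrite !inE /= has_cat => ->; by [].
Qed.

Let eps_le' : eps k s' <= eps k s.
Proof. exact: eps_mono rep_sub rep_le. Qed.

Let D2_LB v : SD vq v <= D2 s vb dist v.
Proof.
case: (boolP (relax s vb dist v)) => h.
  rewrite D2_relax //; apply: le_trans (SDdp p vb v) _; exact: leeD2r.
rewrite /D2 (negbTE h); have [->|nv] := eqVneq v vb; first by rewrite D1_vb.
by rewrite D1_ne //; exact: (@i_lbD s I).
Qed.

Let shapeLB z : res_shape vb dist z -> SD vq z.1 <= z.2%:E.
Proof.
case=> vj [a pj pz f] ->; rewrite valvE //=.
apply: le_trans (SDedge _ _ a) _; apply: leeD2r.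
apply: le_trans (SDdp p vb vj) _; exact: leeD2r.
Qed.

Let relax_vb : live vb -> relax s vb dist vb.
Proof.
move=> lv; rewrite /relax eqxx lv dprefl //= D1_vb.
by rewrite addr0 lexx.
Qed.

Let covP v (x : \bar R) : cov s v x -> cov s' v x.
Proof.
case=> [[y yi yx]|[[b pb hb]|he]]; last by right; right; exact: le_trans eps_le' he.
  move: yi; rewrite Hp mem_cat in_cons => /orP[h|/orP[/eqP[vE yE]|h]].
  - by left; exists y => //; rewrite /= mem_cat h.
  - subst v y; right; left; exists vb => //=.
    by rewrite eqxx (@res_in s vb dist ord Hord) // D2_vb dprefl // adde0.
  - by left; exists y => //; rewrite /= !mem_cat h orbT.
right; left; exists b => //; apply: le_trans hb; exact: leeD2r.
Qed.

Lemma Inv_acc : Inv s'.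
Proof.
case: I => lbD lbP lbR pr C1 C2 cv0 cv RR.
have lbD' : forall p' v, SD vq v <= Dtab s' p' v.
  move=> p' v /=; case: eqP => _ //.
  case: (res_src s vb dist ord v) => [->|[y yi ->]] //.
  exact: (shapeLB _ (@res_out s vb dist ord Hord _ yi)).
constructor => //.
- move=> z; rewrite /= !mem_cat => /or3P[h|h|h].
  + by apply: lbP; rewrite Hp mem_cat h.
  + by apply: lbP; rewrite Hp mem_cat in_cons h !orbT.
  + exact: (shapeLB _ (@res_out s vb dist ord Hord _ h)).
- move=> r; rewrite /= mem_cat => /orP[h|]; first exact: lbR.
  case/mapP=> o; rewrite mem_filter => /andP[/andP[rl _] _] -> /=.
  case/and4P: rl => _ _ f _.
  rewrite /SDo !EFinD fineK //; apply: leeD2r.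
  apply: le_trans (SDdp p vb (vo N o)) _; exact: leeD2r.
- move=> p' /= h; have [h1 h2] := pr p' h; split => //; exact: le_lt_trans eps_le' h2.
- move=> p' b vi pb pvi lv /=; case: eqP => [Ep|_]; last exact: C1.
  rewrite Ep in pb pvi *; rewrite !(@res_in s vb dist ord Hord) //.
  have hv1 := @D2_bound s vb dist vi pvi lv.
  case: (boolP (relax s vb dist b)) => hb.
    rewrite (@D2_relax s vb dist b hb); apply: le_trans hv1 _.
    by rewrite -addeA; apply: leeD2l; exact: dptri.
  have -> : D2 s vb dist b = D1 s vb dist b by rewrite /D2 (negbTE hb).
  have [Eb|nb] := eqVneq b vb; first by subst b; rewrite D1_vb.
  rewrite D1_ne //; apply: le_trans (D2_le _ _ _ _) _.
  apply: le_trans (@D1_le s vb dist Hnd' vi) _; exact: C1.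
- move=> p' b vj v' pb pj a pv /=; case: eqP => [Ep|_]; last exact: C2.
  rewrite Ep in pb pj pv *; rewrite (@res_in s vb dist ord Hord b) //.
  have hr := @res_val s vb dist ord Hord _ _ a pj pv.
  case: (boolP (relax s vb dist b)) => hb.
    rewrite (@D2_relax s vb dist b hb); apply: le_trans hr _; apply: leeD2r.
    by rewrite -addeA; apply: leeD2l; exact: dptri.
  have -> : D2 s vb dist b = D1 s vb dist b by rewrite /D2 (negbTE hb).
  have [Eb|nb] := eqVneq b vb; first by subst b; rewrite D1_vb.
  rewrite D1_ne //; apply: le_trans (res_le _ _ _ _ _) _.
  rewrite D2_out //; exact: C2.
- exact: covP.
- move=> p' v' pv /=; case: eqP => [Ep|_]; last by apply: covP; exact: cv.
  subst p'; case: (res_src s vb dist ord v') => [->|[y yi ->]].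
    rewrite D2_out //; apply: covP; exact: cv.
  by left; exists y; rewrite // !mem_cat yi !orbT.
- move=> o /=; case: eqP => [Ep|_]; last first.
    move=> h; apply: le_trans (rep_le o) _; apply: RR; exact: lt_le_trans h eps_le'.
  rewrite (@res_in s vb dist ord Hord) // => h.
  have lv : live (vo N o) by apply/existsP; exists o.
  case: (boolP (relax s vb dist (vo N o))) => hr.
    have f : dp p vb (vo N o) \is a fin_num by case/and4P: hr.
    have E2 : D2 s vb dist (vo N o) = (dist + fine (dp p vb (vo N o)))%:E.
      by rewrite (@D2_relax s vb dist _ hr) EFinD fineK.
    have Hlt : ((dist + fine (dp p vb (vo N o))) + delta N o)%:E < ep.
      move: Hep; case: ifP => prd.
        move=> _; have [pq lt] := pr _ prd; exfalso.
        have hE : Edist vq p <= SD vq (vo N o).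
          by rewrite -Ep; apply: SDEdist; rewrite Ep eq_sym.
        move: h; rewrite ltNge => /negP; apply.
        apply: le_trans eps_le' _; apply: ltW; apply: lt_le_trans lt _.
        apply: le_trans hE _; apply: le_trans (D2_LB _) _.
        by apply: leeDl; rewrite lee_fin.
      move=> he; rewrite E2 -EFinD in h; exact: lt_le_trans h (le_trans eps_le' he).
    rewrite E2 -EFinD; apply: bmin_le; rewrite mem_cat; apply/orP; right.
    apply/mapP; exists o => //; by rewrite mem_filter mem_enum hr Hlt.
  have nv : vo N o != vb by apply: contraNneq hr => E; rewrite E; apply: relax_vb; rewrite -E.
  have E3 : D2 s vb dist (vo N o) = Dtab s p (vo N o) by rewrite /D2 (negbTE hr) D1_ne.
  rewrite E3 in h *.
  apply: le_trans (rep_le o) _; have := RR o; rewrite Ep; apply.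
  exact: lt_le_trans h eps_le'.
Qed.

End AccInv.


Lemma Inv_step s s2 : Inv s -> step vq k s s2 -> Inv s2.
Proof.
move=> I st; case: st I => [s0 pre post vb dist ep ord Hp Hep Hord | s0 p np pq lt] I.
  case: (boolP (dropc s0 vb dist ep)) => hd.
    rewrite (@process_drop s0 pre post vb dist ep ord hd).
    exact: (@Inv_drop s0 pre post vb dist ep I Hp Hep hd).
  rewrite (@process_acc s0 pre post vb dist ep ord hd).
  exact: (@Inv_acc s0 pre post vb dist ep ord I Hp Hep Hord hd).
exact: Inv_prune.
Qed.

Lemma SDo_rep s o : Inv s -> SDo vq o <= rep s o.
Proof.
case=> _ _ lbR _ _ _ _ _ _; apply: bmin_ge => r rl /eqP ro.
by rewrite -ro; exact: lbR.
Qed.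

Lemma final_thm s Rq : Inv s -> pending s = [::] -> (k < #|O N|)%N ->
  (forall u v, exists t, path (adj N) u t /\ last u t = v) ->
  returned k s Rq ->
  #|Rq| = k /\ forall o o', o \in Rq -> o' \notin Rq -> SDo vq o <= SDo vq o'.
Proof.
move=> I pe cardO conn [sub cardR ordR].
have hk : (k <= #|reported s|)%N.
  rewrite leqNgt; apply/negP => h; have e := @eps_big s h.
  have : [set: O N] \subset reported s.
    apply/fintype.subsetP => o _; have [t [pt lt]] := conn vq (vo N o).
    have := @obj_bound s o t I pe pt lt; rewrite e ltry => /(_ isT) hb.
    have : rep s o < +oo by apply: le_lt_trans hb _; rewrite ltry.
    by move/bmin_has; rewrite inE.
  move/subset_leq_card; rewrite cardsT => h2.
  by move: (leq_ltn_trans h2 h); rewrite ltnNge (ltnW cardO).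
have cR : #|Rq| = k by rewrite cardR; apply/minn_idPl.
split => // o o' oR o'R.
have repo_eps : rep s o <= eps k s.
  rewrite leNgt; apply/negP => lt.
  have hc := @cnt_eps s hk.
  have : [set o2 in reported s | rep s o2 <= eps k s] \subset Rq :\ o.
    apply/fintype.subsetP => o2; rewrite finset.in_set => /andP[o2r o2e].
    rewrite in_setD1; apply/andP; split.
      by apply: contraTneq o2e => ->; rewrite -ltNge.
    apply: contraTT o2e => o2n; rewrite -ltNge.
    apply: lt_le_trans lt (ordR _ _ oR _); by rewrite finset.in_setD o2n.
  move/subset_leq_card; have := cardsD1 o Rq; rewrite oR cR => h3 h4.
  move: (leq_trans hc h4); rewrite /cnt => h5.
  by move: h3; rewrite add1n => h6; move: h5; rewrite -ltnS h6 ltnn.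
rewrite leNgt; apply/negP => lt.
have h1 : SD vq (vo N o') + (delta N o')%:E < rep s o.
  exact: lt_le_trans lt (@SDo_rep s o I).
have h2 : SD vq (vo N o') < rep s o - (delta N o')%:E by rewrite lteBrDr.
have [_ [t /andP[pt /eqP lt'] <-] ht] := ereal_inf_lt h2.
have h3 : (wlen vq t + delta N o')%:E < rep s o by rewrite EFinD -lteBrDr.
have h4 := @obj_bound s o' t I pe pt lt' (lt_le_trans h3 repo_eps).
have o'r : o' \in reported s.
  have : rep s o' < +oo by apply: le_lt_trans h4 _; rewrite ltry.
  by move/bmin_has; rewrite inE.
have o'd : o' \in reported s :\: Rq by rewrite finset.in_setD o'R o'r.
have h5 := ordR _ _ oR o'd.
have := le_lt_trans h5 (le_lt_trans h4 h3).
by rewrite ltxx.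
Qed.

End Protocol.

Theorem theorem2 (R : realType) (N : net R) (vq : V N) (k : nat)
  (adj_sym : forall u v, adj N u v = adj N v u)
  (w_sym : forall u v, adj N u v -> w N u v = w N v u)
  (w_ge0 : forall u v, adj N u v -> 0 <= w N u v)
  (w_euclid : forall u v, adj N u v -> euclid (pos N u) (pos N v) <= w N u v)
  (connected : forall u v, exists s, path (adj N) u s /\ last u s = v)
  (delta_ge0 : forall o, 0 <= delta N o)
  (k_gt0 : (0 < k)%N) (card_O : (k < #|O N|)%N)
  (ex : nat -> state N) (n : nat) :
  execution vq k ex n -> pending (ex n) = [::] ->
  forall Rq : {set O N}, returned k (ex n) Rq ->
    #|Rq| = k /\
    forall o o', o \in Rq -> o' \notin Rq -> (SDo vq o <= SDo vq o')%E.
Proof.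
move=> [ex0 exS] pe Rq ret.
have Iall : forall i, (i <= n)%N -> Inv N vq k (ex i).
  elim=> [|i IH] hi; first by rewrite ex0; exact: (@Inv_init R N vq k w_ge0).
  apply: (@Inv_step R N vq k adj_sym w_ge0 w_euclid delta_ge0 k_gt0 (ex i) (ex i.+1) (IH (ltnW hi))).
  exact: exS.
exact: (@final_thm R N vq k w_ge0 delta_ge0 k_gt0 (ex n) Rq (Iall n (leqnn n)) pe card_O connected ret).
Qed.
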